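(* Let $\mathcal{X} \subseteq \mathbb{R}^m$ be countable and let $\widehat\nu = \sum_{j=1}^N \widehat\nu_j \delta_{\widehat x_j}$ be a probability mass function supported on $N$ distinct points $\widehat x_1,\dots,\widehat x_N \in \mathcal{X}$ with $\widehat\nu_j > 0$ and $\sum_j \widehat\nu_j = 1$. For $\varepsilon \ge 0$ let $\mathbb{B}_{\mathrm{KL}}(\widehat\nu,\varepsilon) = \{\nu \in \mathcal{M}(\mathcal{X}) : \mathrm{KL}(\widehat\nu \parallel \nu) \le \varepsilon\}$. Then for any $\varepsilon \ge 0$ and $x \in \mathcal{X}$: (i) if $x \in \mathrm{supp}(\widehat\nu)$, then $$\sup_{\nu \in \mathbb{B}_{\mathrm{KL}}(\widehat\nu,\varepsilon)} \nu(x) = \max\Big\{ \sum_{j=1}^N y_j \mathbb{1}_x(\widehat x_j) : y \in \mathbb{R}^N_{++},\ \sum_{j=1}^N \widehat\nu_j \log(\widehat\nu_j / y_j) \le \varepsilon,\ e^\top y = 1 \Big\},$$ which is a finite convex optimization problem, where $e$ is the all-ones vector; (ii) if $x \notin \mathrm{supp}(\widehat\nu)$, then $\sup_{\nu \in \mathbb{B}_{\mathrm{KL}}(\widehat\nu,\varepsilon)} \nu(x) = 1 - \exp(-\varepsilon)$.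
   Context: $\mathcal{M}(\mathcal{X})$ is the set of probability mass functions supported on $\mathcal{X}$; $\delta_z$ is the Dirac measure at $z$; $\mathbb{R}^N_{++}$ is the set of vectors with strictly positive entries; $\mathbb{1}_x(\xi) = 1$ if $\xi = x$ and $0$ otherwise. For $\nu_1 \ll \nu_2$, $\mathrm{KL}(\nu_1 \parallel \nu_2) = \sum_{z \in \mathcal{X}} f(\nu_1(z)/\nu_2(z))\,\nu_2(z)$ with $f(t) = t\log t - t + 1$. *)

(* Defs.v *)
From HB Require Import structures.
From mathcomp Require Import all_boot all_order all_algebra.
From mathcomp Require Import all_classical all_reals all_analysis.
Set Implicit Arguments. Unset Strict Implicit. Unset Printing Implicit Defensive.
Import Order.TTheory GRing.Theory Num.Theory.
Local Open Scope classical_set_scope.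
Local Open Scope ring_scope.

Section Defs.
Variables (R : realType) (T : choiceType).

Definition fKL (t : R) : R := t * ln t - t + 1.

Definition is_pmf (S : set T) (nu : T -> R) : Prop :=
  (forall z, 0 <= nu z) /\ (forall z, ~ S z -> nu z = 0) /\
  (\esum_(z in S) (nu z)%:E = 1%E).

Definition KL (S : set T) (nu1 nu2 : T -> R) : \bar R :=
  if `[< forall z, S z -> nu2 z = 0 -> nu1 z = 0 >]
  then \esum_(z in S) (fKL (nu1 z / nu2 z) * nu2 z)%:E
  else +oo%E.

Definition KLball (S : set T) (nuh : T -> R) (eps : R) : set (T -> R) :=
  [set nu | is_pmf S nu /\ (KL S nuh nu <= eps%:E)%E].

End Defs.

Definition nuhat (R : realType) (T : eqType) (N : nat)
  (w : 'I_N -> R) (xh : 'I_N -> T) (z : T) : R :=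
  \sum_(j < N) w j * (xh j == z)%:R.

(* Main.v *)
Require Import Defs.
From HB Require Import structures.
From mathcomp Require Import all_boot all_order all_algebra.
From mathcomp Require Import all_classical all_reals all_analysis.
From mathcomp Require Import ring lra.
Import Order.TTheory GRing.Theory Num.Theory.
Import numFieldNormedType.Exports.
Local Open Scope classical_set_scope.
Local Open Scope ring_scope.

Section Aux.
Variable R : realType.
Implicit Types x y a b : R.

Lemma ln_le_sub1 x : 0 < x -> ln x <= x - 1.
Proof.
move=> x0; have H := @le_ln1Dx R (x - 1).
have e : 1 + (x - 1) = x by ring.
rewrite e in H; apply: H; lra.
Qed.

Lemma lnB_ge x y : 0 < x -> 0 < y -> 1 - y / x <= ln x - ln y.
Proof.
move=> x0 y0; have := @ln_le_sub1 (y / x) (divr_gt0 y0 x0).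
rewrite ln_div ?posrE //; lra.
Qed.

Definition hf (w c s : R) : R := w * ln w - w * ln s + c * ln c - c * ln (1 - s).

Lemma hcont (w c : R) a b : 0 < a -> b < 1 ->
  {within `[a, b], continuous (hf w c)}.
Proof.
move=> a0 b1; apply: (@continuous_in_subspaceT R R) => s; rewrite inE /= in_itv /= => /andP[aS sb].
have s0 : 0 < s by lra.
have s1 : 0 < 1 - s by lra.
rewrite /hf.
apply: cvgB; last apply: cvgM; [|exact: cvg_cst|].
  apply: cvgD; last exact: cvg_cst.
  apply: cvgB; first exact: cvg_cst.
  apply: cvgM; first exact: cvg_cst.
  exact: continuous_ln.
have := @continuous_comp R R R (fun s => 1 - s) (@ln R) s.
apply.
  apply: cvgB; [exact: cvg_cst|exact: cvg_id].
exact: continuous_ln.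
Qed.

Lemma lnB2_ge a b p q : 0 < a -> 0 < b -> 0 < p -> 0 < q ->
  1 - (b * p) / (a * q) <= (ln a - ln b) - (ln p - ln q).
Proof.
move=> a0 b0 p0 q0.
have -> : (ln a - ln b) - (ln p - ln q) = ln (a * q) - ln (b * p).
  by rewrite !lnM ?posrE //; ring.
by apply: lnB_ge; apply: mulr_gt0.
Qed.

Lemma logsum (I : finType) (P : pred I) (w y : I -> R) :
  (forall j, P j -> 0 < w j) -> (forall j, P j -> 0 < y j) ->
  0 < \sum_(j | P j) w j -> 0 < \sum_(j | P j) y j ->
  (\sum_(j | P j) w j) * (ln (\sum_(j | P j) w j) - ln (\sum_(j | P j) y j))
    <= \sum_(j | P j) w j * (ln (w j) - ln (y j)).
Proof.
set W := \sum_(j | P j) w j; set r := \sum_(j | P j) y j.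
move=> w0 y0 W0 r0.
have H : \sum_(j | P j) (w j - y j * (W / r))
   <= \sum_(j | P j) w j * ((ln (w j) - ln (y j)) - (ln W - ln r)).
  apply: ler_sum => j Pj.
  have := @lnB2_ge (w j) (y j) W r (w0 j Pj) (y0 j Pj) W0 r0.
  have wj := w0 j Pj.
  have e : w j * (1 - y j * W / (w j * r)) = w j - y j * (W / r).
    by field; rewrite ?gt_eqF //.
  move=> h; rewrite -e; apply: ler_wpM2l; [exact: ltW|exact: h].
move: H; rewrite sumrB -mulr_suml -/W -/r.
have -> : r * (W / r) = W by field; rewrite gt_eqF.
rewrite subrr.
under eq_bigr => j _ do rewrite mulrBr.
rewrite sumrB -mulr_suml -/W subr_ge0 //.
Qed.

Lemma hf_diff (w s1 s2 : R) : 0 < w -> w <= s1 -> s1 < s2 -> s2 < 1 ->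
  (s2 - s1) * (s1 - w) / (s1 * (1 - s1)) <= hf w (1 - w) s2 - hf w (1 - w) s1.
Proof.
move=> w0 ws1 s12 s21.
have s10 : 0 < s1 by lra.
have s20 : 0 < s2 by lra.
have s11 : 0 < 1 - s1 by lra.
have s22 : 0 < 1 - s2 by lra.
have e : hf w (1 - w) s2 - hf w (1 - w) s1 =
   w * (ln s1 - ln s2) + (1 - w) * (ln (1 - s1) - ln (1 - s2)) by rewrite /hf; ring.
rewrite e.
have h1 := @lnB_ge s1 s2 s10 s20.
have h2 := @lnB_ge (1 - s1) (1 - s2) s11 s22.
have e2 : (s2 - s1) * (s1 - w) / (s1 * (1 - s1)) =
   w * (1 - s2 / s1) + (1 - w) * (1 - (1 - s2) / (1 - s1)).
  by field; rewrite ?gt_eqF ?mulr_gt0.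
rewrite e2; apply: lerD; apply: ler_wpM2l => //; lra.
Qed.

Lemma hf_lt (w s1 s2 : R) : 0 < w -> w <= s1 -> s1 < s2 -> s2 < 1 ->
  hf w (1 - w) s1 < hf w (1 - w) s2.
Proof.
move=> w0 ws1 s12 s21.
pose m := (s1 + s2) / 2.
have m1 : s1 < m by rewrite /m; lra.
have m2 : m < s2 by rewrite /m; lra.
have h1 := @hf_diff w s1 m w0 ws1 m1 (lt_trans m2 s21).
have h2 := @hf_diff w m s2 w0 (ltW (le_lt_trans ws1 m1)) m2 s21.
have p1 : 0 <= (m - s1) * (s1 - w) / (s1 * (1 - s1)).
  apply: divr_ge0; first by apply: mulr_ge0; lra.
  by apply: mulr_ge0; lra.
have p2 : 0 < (s2 - m) * (m - w) / (m * (1 - m)).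
  apply: divr_gt0; first by apply: mulr_gt0; lra.
  by apply: mulr_gt0; lra.
lra.
Qed.

Lemma lnsum_div (I : finType) (w y : I -> R) :
  (forall j, 0 < w j) -> (forall j, 0 < y j) ->
  \sum_j w j * ln (w j / y j) = \sum_j w j * (ln (w j) - ln (y j)).
Proof.
by move=> w0 y0; apply: eq_bigr => j _; rewrite ln_div ?posrE.
Qed.

Lemma opt (I : finType) (w : I -> R) (k : I) (eps : R) :
  (forall j, 0 < w j) -> \sum_j w j = 1 -> 0 <= eps ->
  exists y : I -> R, [/\ (forall j, 0 < y j),
    \sum_j w j * ln (w j / y j) <= eps, \sum_j y j = 1 &
    forall y' : I -> R, (forall j, 0 < y' j) ->
      \sum_j w j * ln (w j / y' j) <= eps -> \sum_j y' j = 1 -> y' k <= y k].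
Proof.
move=> w0 w1 e0.
have yk_le (y' : I -> R) : (forall j, 0 < y' j) -> y' k <= \sum_j y' j.
  move=> y'0; rewrite (bigD1 k) //= lerDl; apply: sumr_ge0 => j _; exact: ltW.
set c := \sum_(j | j != k) w j.
have wc : w k + c = 1 by rewrite -w1 [RHS](bigD1 k).
have c0 : 0 <= c by apply: sumr_ge0 => j _; exact: ltW.
have wk0 := w0 k.
case: (eqVneq c 0) => [c_eq0|c_neq0].
  exists w; split => //.
  - rewrite (eq_bigr (fun _ => 0)) ?big1 // => j _.
    by rewrite divff ?gt_eqF // ln1 mulr0.
  - move=> y' y'0 _ y'1; have := yk_le y' y'0; lra.
have cpos : 0 < c by rewrite lt_def c_neq0 c0.
have ec : c = 1 - w k by lra.
move: wk0 wc ec; set wk := w k => wk0 wc ec.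
have lnwk : ln wk <= 0 by apply: ln_le0; lra.
have wlnw : wk * ln wk <= 0 by rewrite pmulr_rle0.
set E := expR (- ((eps - wk * ln wk) / c)).
have E0 : 0 < E by apply: expR_gt0.
have E1 : E <= 1.
  rewrite /E expR_le1 oppr_le0; apply: divr_ge0 => //; lra.
set b := 1 - c * E.
have cE : 0 < c * E by apply: mulr_gt0.
have cE1 : c * E <= c by rewrite ger_pMr.
have hb : wk <= b by rewrite /b; lra.
have b1 : b < 1 by rewrite /b; lra.
have b0 : 0 < b by lra.
have hfa : hf wk c wk = 0 by rewrite /hf -ec; ring.
have hfb : eps <= hf wk c b.
  have e1 : 1 - b = c * E by rewrite /b; ring.
  rewrite /hf e1 lnM ?posrE // /E expRK.
  have lnb : ln b <= 0 by apply: ln_le0; lra.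
  have e2 : c * (- ((eps - wk * ln wk) / c)) = - (eps - wk * ln wk).
    by field; rewrite gt_eqF.
  have : 0 <= wk * ln b * (-1) by rewrite mulrN1 oppr_ge0 pmulr_rle0.
  move: e2; set q := (eps - wk * ln wk) / c => e2.
  have -> : wk * ln wk - wk * ln b + c * ln c - c * (ln c + - q) = wk * ln wk - wk * ln b + c * q by ring.
  have -> : c * q = eps - wk * ln wk by rewrite /q; field; rewrite gt_eqF.
  lra.
have [s sI hs] : exists2 s, s \in `[wk, b] & hf wk c s = eps.
  apply: IVT => //; first exact: hcont.
  rewrite hfa ge_min le_max e0 hfb /=; by rewrite orbT.
move: sI; rewrite in_itv /= => /andP[ws sb].
have s0 : 0 < s by lra.
have s1 : 0 < 1 - s by rewrite /b in sb; lra.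
pose y := fun j => if j == k then s else w j * (1 - s) / c.
exists y; split.
- move=> j; rewrite /y; case: ifP => _ //.
  by apply: divr_gt0 => //; apply: mulr_gt0.
- have y0 : forall j, 0 < y j.
    move=> j; rewrite /y; case: ifP => _ //.
    by apply: divr_gt0 => //; apply: mulr_gt0.
  rewrite lnsum_div // (bigD1 k) //= /y eqxx.
  rewrite (eq_bigr (fun j => w j * (ln c - ln (1 - s)))); last first.
    move=> j /negbTE ->.
    rewrite ln_div ?posrE ?mulr_gt0 // lnM ?posrE //; congr (_ * _); ring.
  rewrite -mulr_suml -/c -/wk -hs le_eqVlt; apply/orP; left; apply/eqP; rewrite /hf; ring.
- rewrite (bigD1 k) //= /y eqxx.
  rewrite (eq_bigr (fun j => w j * (1 - s) / c)); last by move=> j /negbTE ->.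
  rewrite -!mulr_suml -/c; by field; rewrite gt_eqF.
- move=> y' y'0 y'f y'1.
  rewrite /y eqxx leNgt; apply/negP => hlt.
  have [j0 j0k] : exists j0, j0 != k.
    have [/existsP[j0 j0k] | /existsPn nj] := boolP [exists j, j != k].
      by exists j0.
    exfalso; move: c_neq0; rewrite /c big1 ?eqxx // => j jk.
    by move: (nj j); rewrite jk.
  set r := \sum_(j | j != k) y' j.
  have y'1' : y' k + r = 1 by rewrite -y'1 [RHS](bigD1 k).
  have r0 : 0 < r.
    rewrite /r (bigD1 j0) //=.
    have : 0 <= \sum_(i | (i != k) && (i != j0)) y' i.
      by apply: sumr_ge0 => j _; exact: ltW.
    have := y'0 j0; lra.
  have ls := @logsum I (fun j => j != k) w y' (fun j _ => w0 j) (fun j _ => y'0 j) cpos r0.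
  move: y'f; rewrite lnsum_div // (bigD1 k) //= -/c -/r -/wk => y'f.
  have hle : hf wk c (y' k) <= eps.
    have e1 : 1 - y' k = r by lra.
    rewrite /hf e1.
    move: ls; rewrite -/c -/r => ls.
    have : wk * (ln wk - ln (y' k)) + c * (ln c - ln r) <= eps by lra.
    have -> : wk * (ln wk - ln (y' k)) + c * (ln c - ln r) = wk * ln wk - wk * ln (y' k) + c * ln c - c * ln r by ring.
    done.
  have := @hf_lt wk s (y' k) wk0 ws hlt ltac:(lra).
  rewrite -ec; lra.
Qed.
End Aux.
Section Es.
Variable R : realType.

Lemma fsbig_setT_fin (I : finType) (f : I -> \bar R) :
  (\sum_(i \in [set: I]) f i = \sum_i f i)%E.
Proof.
rewrite (fsbigE (enum I)) ?enum_uniq //; last by move=> i _; rewrite mem_enum.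
rewrite big_enum_cond /=; apply: eq_bigl => i; by rewrite in_setT.
Qed.

Lemma esum_range (T : choiceType) (I : finType) (g : I -> T) (a : T -> \bar R) :
  injective g -> (forall i, (0 <= a (g i))%E) ->
  (\esum_(z in range g) a z = \sum_i a (g i))%E.
Proof.
move=> ginj a0.
rewrite esum_image; last by move=> x y _ _; apply: ginj.
rewrite esum_fset; [exact: fsbig_setT_fin|exact: finite_finset|by move=> i _].
Qed.

Lemma esum_split_range (T : choiceType) (I : finType) (S : set T) (g : I -> T)
   (a : T -> \bar R) : injective g -> (forall i, S (g i)) ->
  (forall z, S z -> (0 <= a z)%E) ->
  (\esum_(z in S) a z = \sum_i a (g i) + \esum_(z in S `&` ~` range g) a z)%E.
Proof.
move=> ginj gS a0; rewrite (esumID (range g)) //.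
have -> : S `&` range g = range g.
  by apply/seteqP; split => z; [case|move=> [i _ <-]; split => //; exists i].
by rewrite esum_range // => i; apply: a0.
Qed.

Lemma esum_ge_range (T : choiceType) (I : finType) (S : set T) (g : I -> T)
   (a : T -> \bar R) : injective g -> (forall i, S (g i)) ->
  (forall z, S z -> (0 <= a z)%E) ->
  (\sum_i a (g i) <= \esum_(z in S) a z)%E.
Proof.
move=> ginj gS a0; rewrite (@esum_split_range T I S g a ginj gS a0) leeDl //.
by apply: esum_ge0 => z [Sz _]; apply: a0.
Qed.

Lemma esum_eq_range (T : choiceType) (I : finType) (S : set T) (g : I -> T)
   (a : T -> \bar R) : injective g -> (forall i, S (g i)) ->
  (forall z, S z -> (0 <= a z)%E) ->
  (forall z, S z -> ~ range g z -> a z = 0%E) ->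
  (\esum_(z in S) a z = \sum_i a (g i))%E.
Proof.
move=> ginj gS a0 az; rewrite (@esum_split_range T I S g a ginj gS a0) esum1 ?adde0 //.
by move=> z [Sz nz]; apply: az.
Qed.

Lemma esum_split1 (T : choiceType) (S : set T) (x : T) (a : T -> \bar R) :
  S x -> (forall z, S z -> (0 <= a z)%E) ->
  (\esum_(z in S) a z = a x + \esum_(z in S `&` ~` [set x]) a z)%E.
Proof.
move=> Sx a0; rewrite (esumID [set x]) //.
have -> : S `&` [set x] = [set x].
  by apply/seteqP; split => z; [case|move=> ->].
by rewrite esum_set1 //; apply: a0.
Qed.

Lemma esum_ge_x (T : choiceType) (I : finType) (S : set T) (x : T) (g : I -> T)
   (a : T -> \bar R) : S x -> injective g -> (forall i, S (g i)) ->
  (forall i, g i != x) -> (forall z, S z -> (0 <= a z)%E) ->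
  (a x + \sum_i a (g i) <= \esum_(z in S) a z)%E.
Proof.
move=> Sx ginj gS gx a0; rewrite (@esum_split1 T S x a Sx a0) leeD2l //.
apply: esum_ge_range => //; first by move=> i; split => //; apply/eqP; exact: gx.
by move=> z [Sz _]; apply: a0.
Qed.

Lemma esum_eq_x (T : choiceType) (I : finType) (S : set T) (x : T) (g : I -> T)
   (a : T -> \bar R) : S x -> injective g -> (forall i, S (g i)) ->
  (forall i, g i != x) -> (forall z, S z -> (0 <= a z)%E) ->
  (forall z, S z -> z <> x -> ~ range g z -> a z = 0%E) ->
  (\esum_(z in S) a z = a x + \sum_i a (g i))%E.
Proof.
move=> Sx ginj gS gx a0 az; rewrite (@esum_split1 T S x a Sx a0); congr (_ + _)%E.
apply: esum_eq_range => //; first by move=> i; split => //; apply/eqP; exact: gx.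
  by move=> z [Sz _]; apply: a0.
by move=> z [Sz zx] nz; apply: az => //; move=> e; apply: zx.
Qed.

Lemma sup_max (A : set R) v : A v -> ubound A v -> sup A = v.
Proof.
move=> Av ub; apply/eqP; rewrite eq_le; apply/andP; split.
  by apply: ge_sup => //; exists v.
by apply: sup_upper_bound => //; split; [exists v|exists v].
Qed.
End Es.

Section KLs.
Variables (R : realType) (T : choiceType) (N : nat) (w : 'I_N -> R) (xh : 'I_N -> T).
Hypothesis xh_inj : injective xh.
Hypothesis w0 : forall j, 0 < w j.

Lemma nuhat_xh (v : 'I_N -> R) j : nuhat v xh (xh j) = v j.
Proof.
rewrite /nuhat (bigD1 j) //= eqxx mulr1 big1 ?addr0 // => i ij.
by rewrite (inj_eq xh_inj) (negbTE ij) mulr0.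
Qed.

Lemma nuhat_out (v : 'I_N -> R) z : (forall j, xh j != z) -> nuhat v xh z = 0.
Proof. by move=> h; rewrite /nuhat big1 // => i _; rewrite (negbTE (h i)) mulr0. Qed.

Lemma nuhat_ge0 (v : 'I_N -> R) z : (forall j, 0 <= v j) -> 0 <= nuhat v xh z.
Proof. by move=> h; apply: sumr_ge0 => i _; apply: mulr_ge0. Qed.

Lemma fKL0 : fKL 0 = 1 :> R.
Proof. by rewrite /fKL mul0r subr0 add0r. Qed.

Lemma fKL_ge0 (t : R) : 0 <= t -> 0 <= fKL t.
Proof.
rewrite le_eqVlt => /orP[/eqP <-|t0]; first by rewrite fKL0.
have := @lnB_ge R t 1 t0 ltr01; rewrite ln1 subr0 /fKL => h.
have : t * (1 - 1 / t) <= t * ln t by apply: ler_wpM2l => //; exact: ltW.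
have -> : t * (1 - 1 / t) = t - 1 by field; rewrite gt_eqF.
lra.
Qed.

Lemma fKL_term (a b : R) : 0 < b -> fKL (a / b) * b = a * ln (a / b) - a + b.
Proof.
move=> b0; rewrite /fKL.
have e : a / b * b = a by field; rewrite gt_eqF.
have -> : (a / b * ln (a / b) - a / b + 1) * b = (a / b * b) * ln (a / b) - a / b * b + b by ring.
by rewrite e.
Qed.

Lemma term_ge0 (S : set T) (nu : T -> R) z : (forall z, 0 <= nu z) ->
  (0 <= (fKL (nuhat w xh z / nu z) * nu z)%:E)%E.
Proof.
move=> nu0; rewrite lee_fin; apply: mulr_ge0 => //; apply: fKL_ge0.
apply: divr_ge0 => //; apply: nuhat_ge0 => j; exact: ltW.
Qed.

Variable X : set T.
Hypothesis xhX : forall j, X (xh j).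

Lemma ball_ac nu eps : KLball X (nuhat w xh) eps nu ->
  forall z, X z -> nu z = 0 -> nuhat w xh z = 0.
Proof.
move=> [_ hKL]; move: hKL; rewrite /KL; case: asboolP => // _.
Qed.

Lemma ball_KL nu eps : KLball X (nuhat w xh) eps nu ->
  (\esum_(z in X) (fKL (nuhat w xh z / nu z) * nu z)%:E <= eps%:E)%E.
Proof.
move=> hb; have := hb; move=> [_ hKL]; move: hKL; rewrite /KL.
by case: asboolP.
Qed.

Lemma ball_pos nu eps : KLball X (nuhat w xh) eps nu -> forall j, 0 < nu (xh j).
Proof.
move=> hb j; have hac := @ball_ac nu eps hb; move: hb => [[nu0 _] _].
rewrite lt_def nu0 andbT; apply/eqP => h.
have := hac _ (xhX j) h; rewrite nuhat_xh; apply/eqP; rewrite gt_eqF //.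
Qed.

Lemma ball_sum nu eps : KLball X (nuhat w xh) eps nu ->
  \sum_j fKL (w j / nu (xh j)) * nu (xh j) <= eps /\ \sum_j nu (xh j) <= 1.
Proof.
move=> hb; have hK := @ball_KL nu eps hb; move: hb => [[nu0 [nuX nu1]] _]; split.
  rewrite -lee_fin -sumEFin; apply: le_trans hK.
  under eq_bigr => j _ do rewrite -(nuhat_xh w j).
  by apply: (@esum_ge_range R T 'I_N X xh (fun z => (fKL (nuhat w xh z / nu z) * nu z)%:E)) => // z _; apply: term_ge0.
rewrite -lee_fin -sumEFin -nu1.
by apply: (@esum_ge_range R T 'I_N X xh (fun z => (nu z)%:E)) => // z _; rewrite lee_fin.
Qed.

Lemma ball_sum_x nu eps x : X x -> (forall j, xh j != x) ->
  KLball X (nuhat w xh) eps nu ->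
  nu x + \sum_j fKL (w j / nu (xh j)) * nu (xh j) <= eps /\ nu x + \sum_j nu (xh j) <= 1.
Proof.
move=> Xx nx hb; have hK := @ball_KL nu eps hb; move: hb => [[nu0 [nuX nu1]] _]; split.
  rewrite -lee_fin EFinD -sumEFin; apply: le_trans hK.
  have -> : nu x = fKL (nuhat w xh x / nu x) * nu x.
    by rewrite nuhat_out // mul0r fKL0 mul1r.
  under eq_bigr => j _ do rewrite -(nuhat_xh w j).
  by apply: (@esum_ge_x R T 'I_N X x xh (fun z => (fKL (nuhat w xh z / nu z) * nu z)%:E)) => // z _; apply: term_ge0.
rewrite -lee_fin EFinD -sumEFin -nu1.
by apply: (@esum_ge_x R T 'I_N X x xh (fun z => (nu z)%:E)) => // z _; rewrite lee_fin.
Qed.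

Lemma nuhat_out' (v : 'I_N -> R) z : ~ range xh z -> nuhat v xh z = 0.
Proof. by move=> nz; apply: nuhat_out => j; apply/eqP => e; apply: nz; exists j. Qed.

Hypothesis w1 : \sum_j w j = 1.

Lemma ball_in_y (y : 'I_N -> R) (eps : R) : (forall j, 0 < y j) -> \sum_j y j = 1 ->
  \sum_j w j * ln (w j / y j) <= eps -> KLball X (nuhat w xh) eps (nuhat y xh).
Proof.
move=> y0 y1 yf; split.
  split; first by move=> z; apply: nuhat_ge0 => j; exact: ltW.
  split; first by move=> z nz; apply: nuhat_out' => -[j _ e]; apply: nz; rewrite -e.
  rewrite (@esum_eq_range R T 'I_N X xh (fun z => (nuhat y xh z)%:E)) //.
  - by rewrite sumEFin; under eq_bigr => j _ do rewrite nuhat_xh; rewrite y1.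
  - by move=> z _; rewrite lee_fin; apply: nuhat_ge0 => j; exact: ltW.
  - by move=> z _ nz; rewrite nuhat_out'.
rewrite /KL asboolT; last first.
  move=> z Xz h; case: (pselect (range xh z)) => [[j _ e]|nz]; last exact: nuhat_out'.
  by move: h; rewrite -e nuhat_xh => h; have := y0 j; rewrite h ltxx.
rewrite (@esum_eq_range R T 'I_N X xh (fun z => (fKL (nuhat w xh z / nuhat y xh z) * nuhat y xh z)%:E)) //.
- rewrite sumEFin lee_fin.
  under eq_bigr => j _ do rewrite !nuhat_xh fKL_term //.
  by rewrite big_split /= sumrB w1 y1 subrK.
- by move=> z _; apply: (@term_ge0 X (nuhat y xh) z) => z'; apply: nuhat_ge0 => j; exact: ltW.
- by move=> z _ nz; rewrite (@nuhat_out' y z nz) mulr0.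
Qed.

Lemma ball_in_x (x : T) (eps : R) : X x -> (forall j, xh j != x) -> 0 <= eps ->
  KLball X (nuhat w xh) eps
    (fun z => expR (- eps) * nuhat w xh z + (1 - expR (- eps)) * (z == x)%:R).
Proof.
move=> Xx nx e0.
set q := expR (- eps).
have q0 : 0 < q by apply: expR_gt0.
have q1 : q <= 1 by rewrite /q expR_le1 oppr_le0.
have nu0 : forall z, 0 <= q * nuhat w xh z + (1 - q) * (z == x)%:R.
  move=> z; apply: addr_ge0; apply: mulr_ge0; rewrite ?subr_ge0 //; first exact: ltW.
  by apply: nuhat_ge0 => j; exact: ltW.
have nux : q * nuhat w xh x + (1 - q) * (x == x)%:R = 1 - q.
  by rewrite nuhat_out // mulr0 add0r eqxx mulr1.
have nuj : forall j, q * nuhat w xh (xh j) + (1 - q) * (xh j == x)%:R = q * w j.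
  by move=> j; rewrite nuhat_xh (negbTE (nx j)) mulr0 addr0.
have nuz : forall z, z <> x -> ~ range xh z -> q * nuhat w xh z + (1 - q) * (z == x)%:R = 0.
  by move=> z zx nz; rewrite nuhat_out' // mulr0 add0r; move/eqP/negbTE: zx => ->; rewrite mulr0.
split.
  split => //; split.
    move=> z nz; apply: nuz; first by move=> e; apply: nz; rewrite e.
    by move=> [j _ e]; apply: nz; rewrite -e.
  rewrite (@esum_eq_x R T 'I_N X x xh (fun z => (q * nuhat w xh z + (1 - q) * (z == x)%:R)%:E)) //.
  - rewrite sumEFin -EFinD nux; under eq_bigr => j _ do rewrite nuj.
    by rewrite -mulr_sumr w1 mulr1 subrK.
  - by move=> z _; rewrite lee_fin.
  - by move=> z _ zx nz; rewrite nuz.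
rewrite /KL asboolT; last first.
  move=> z Xz h; case: (pselect (range xh z)) => [[j _ e]|nz]; last exact: nuhat_out'.
  move: h; rewrite -e nuj => /eqP; rewrite mulf_eq0 !gt_eqF //.
rewrite (@esum_eq_x R T 'I_N X x xh (fun z => (fKL (nuhat w xh z / (q * nuhat w xh z + (1 - q) * (z == x)%:R)) * (q * nuhat w xh z + (1 - q) * (z == x)%:R))%:E)) //.
- rewrite sumEFin -EFinD lee_fin nux (@nuhat_out w x nx) mul0r fKL0 mul1r.
  under eq_bigr => j _ do rewrite nuj nuhat_xh fKL_term ?mulr_gt0 //.
  have e1 : forall j, w j / (q * w j) = q^-1.
    by move=> j; field; rewrite !gt_eqF.
  under eq_bigr => j _ do rewrite e1 lnV ?posrE // /q expRK opprK.
  rewrite big_split /= sumrB -mulr_suml -mulr_sumr w1 -/q; lra.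
- by move=> z _; rewrite lee_fin; apply: mulr_ge0 => //; apply: fKL_ge0;
    apply: divr_ge0 => //; apply: nuhat_ge0 => j; exact: ltW.
- by move=> z _ zx nz; rewrite nuz // mulr0.
Qed.

Lemma ub_x (nu : T -> R) (x : T) (eps : R) : X x -> (forall j, xh j != x) ->
  KLball X (nuhat w xh) eps nu -> nu x <= 1 - expR (- eps).
Proof.
move=> Xx nx hb.
have np := @ball_pos nu eps hb.
have [h1 h2] := @ball_sum_x nu eps x Xx nx hb.
have nu0 : 0 <= nu x by case: hb => [[]].
set u := \sum_j nu (xh j).
have N0 : (0 < N)%N.
  by case: N w w1 => // w' ; rewrite big_ord0 => /eqP; rewrite eq_sym oner_eq0.
have u0 : 0 < u.
  rewrite /u (bigD1 (Ordinal N0)) //=.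
  have : 0 <= \sum_(i < N | i != Ordinal N0) nu (xh i) by apply: sumr_ge0 => j _; exact: ltW.
  have := np (Ordinal N0); lra.
move: h1; under eq_bigr => j _ do rewrite fKL_term //.
rewrite big_split /= sumrB w1 lnsum_div // -/u => h1.
have ls := @logsum R 'I_N xpredT w (fun j => nu (xh j)) (fun j _ => w0 j) (fun j _ => np j).
rewrite /= w1 ln1 mul1r -/u in ls.
have ls' := ls ltr01 u0.
set v := 1 - nu x.
have h2' : nu x + u <= 1 by exact: h2.
have uv : u <= v by rewrite /v; lra.
have v0 : 0 < v by lra.
have v1 : v <= 1 by rewrite /v; lra.
have hl := @lnB_ge R v u v0 u0.
have e2 : 1 - u / v - (v - u) = (v - u) * (1 - v) / v by field; rewrite gt_eqF.
have : 0 <= (v - u) * (1 - v) / v by apply: divr_ge0; [apply: mulr_ge0; lra|lra].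
rewrite -e2 => h3.
have ls2 : 0 - ln u <= \sum_j w j * (ln (w j) - ln (nu (xh j))) by exact: ls'.
have ev : v = 1 - nu x by [].
have lnv : - eps <= ln v by lra.
have : expR (- eps) <= v by rewrite -(lnK (x:=v)) ?posrE // ler_expR.
rewrite /v; lra.
Qed.

Lemma ub_k (nu : T -> R) (eps : R) (k : 'I_N) : KLball X (nuhat w xh) eps nu ->
  exists y' : 'I_N -> R, [/\ (forall j, 0 < y' j),
     \sum_j w j * ln (w j / y' j) <= eps, \sum_j y' j = 1 & nu (xh k) <= y' k].
Proof.
move=> hb.
have np := @ball_pos nu eps hb.
have [h1 h2] := @ball_sum nu eps hb.
set u := \sum_j nu (xh j).
have h2' : u <= 1 by exact: h2.
have u0 : 0 < u.
  rewrite /u (bigD1 k) //=.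
  have : 0 <= \sum_(i < N | i != k) nu (xh i) by apply: sumr_ge0 => j _; exact: ltW.
  have := np k; lra.
move: h1; under eq_bigr => j _ do rewrite fKL_term //.
rewrite big_split /= sumrB w1 lnsum_div // => h1.
have h1' : \sum_j w j * (ln (w j) - ln (nu (xh j))) - 1 + u <= eps by exact: h1.
exists (fun j => nu (xh j) / u); split.
- by move=> j; apply: divr_gt0.
- rewrite (@lnsum_div R _ w _ w0); last by move=> j; apply: divr_gt0.
  rewrite (eq_bigr (fun j => w j * (ln (w j) - ln (nu (xh j))) + w j * ln u)); last first.
    by move=> j _; rewrite ln_div ?posrE //; ring.
  rewrite big_split /= -mulr_suml w1 mul1r.
  have := @ln_le_sub1 R u u0; lra.
- by rewrite /= -mulr_suml -/u divff // gt_eqF.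
- have e : nu (xh k) = nu (xh k) / u * u by field; rewrite gt_eqF.
  rewrite {1}e; apply: ler_piMr => //; apply: divr_ge0 => //; exact: ltW.
Qed.
End KLs.

Theorem mainTheorem3 (R : realType) (m : nat) (X : set 'rV[R]_m)
  (N : nat) (w : 'I_N -> R) (xh : 'I_N -> 'rV[R]_m) (eps : R) (x : 'rV[R]_m) :
  countable X ->
  injective xh ->
  (forall j, X (xh j)) ->
  (forall j, 0 < w j) ->
  \sum_(j < N) w j = 1 ->
  0 <= eps ->
  X x ->
  ((exists j, xh j = x) ->
     exists y : 'I_N -> R,
       [/\ (forall j, 0 < y j),
           \sum_(j < N) w j * ln (w j / y j) <= eps,
           \sum_(j < N) y j = 1,
           sup [set nu x | nu in KLball X (nuhat w xh) eps]
             = \sum_(j < N) y j * (xh j == x)%:R &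
           forall y' : 'I_N -> R,
             (forall j, 0 < y' j) ->
             \sum_(j < N) w j * ln (w j / y' j) <= eps ->
             \sum_(j < N) y' j = 1 ->
             \sum_(j < N) y' j * (xh j == x)%:R
               <= \sum_(j < N) y j * (xh j == x)%:R]) /\
  ((forall j, xh j != x) ->
     sup [set nu x | nu in KLball X (nuhat w xh) eps] = 1 - expR (- eps)).
Proof.
move=> _ xinj xhX w0 w1 e0 Xx; split.
  move=> [k xk]; subst x.
  have [y [y0 yf y1 yopt]] := @opt R 'I_N w k eps w0 w1 e0.
  have ey : forall v : 'I_N -> R, \sum_(j < N) v j * (xh j == xh k)%:R = v k.
    by move=> v; have := @nuhat_xh R _ N xh xinj v k; rewrite /nuhat.
  exists y; split => //; last by move=> y' h1 h2 h3; rewrite !ey; apply: yopt.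
  rewrite ey; apply: sup_max.
    exists (nuhat y xh); last by rewrite nuhat_xh.
    exact: (@ball_in_y R _ N w xh xinj w0 X xhX w1 y eps y0 y1 yf).
  move=> _ [nu hnu <-].
  have [y' [y'0 y'f y'1 le]] := @ub_k R _ N w xh xinj w0 X xhX w1 nu eps k hnu.
  exact: le_trans le (yopt y' y'0 y'f y'1).
move=> nx; apply: sup_max.
  exists (fun z => expR (- eps) * nuhat w xh z + (1 - expR (- eps)) * (z == x)%:R).
    exact: (@ball_in_x R _ N w xh xinj w0 X xhX w1 x eps Xx nx e0).
  by rewrite (@nuhat_out R _ N xh w x nx) mulr0 add0r eqxx mulr1.
move=> _ [nu hnu <-].
exact: (@ub_x R _ N w xh xinj w0 X xhX w1 nu x eps Xx nx hnu).
Qed.
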